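(* Let $G$ be a simple complex Lie group with Lie algebra $\mathfrak g$, $\rho\colon G\to\mathrm{GL}(V)$ a faithful irreducible finite-dimensional complex representation with differential $\rho_*$, $T$ a maximal torus of $G$ with Lie algebra $\mathfrak t$. Suppose $g\in T$ and $x\in\mathfrak t$ satisfy $\rho(g)=\rho_*(x)$ in $\mathrm{End}(V)$. Let $e_1,\dots,e_n$ be a basis of $V$ of $T$-weight vectors with characters $\chi_1,\dots,\chi_n\in X^*(T)$. If $\chi_i\chi_j=\chi_k\chi_l$ for four of these characters, then, as polynomials in $z$, $$(z-\chi_i(g))(z-\chi_j(g))=(z-\chi_k(g))(z-\chi_l(g)).$$
   Context: Each character $\chi\in X^*(T)$ is identified with the linear form $t^*\in\mathfrak t^*$ satisfying $\chi(\exp(y))=\exp(t^*(y))$ for all $y\in\mathfrak t$. *)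

(* Defs.v *)
(* Complex numbers are modelled as R[i] for R : realType
   (mathcomp-real-closed 'complex'); R[i] is the field C when R = reals. *)
From HB Require Import structures.
From mathcomp Require Import all_boot all_order all_algebra.
From mathcomp Require Import complex reals.
Set Implicit Arguments. Unset Strict Implicit. Unset Printing Implicit Defensive.
Import Order.TTheory GRing.Theory Num.Theory.
Local Open Scope ring_scope.

(* Maximal torus T of rank r, realised as (C^x)^r; its Lie algebra t = C^r.
   An element of T is a vector t : 'I_r -> C with all coordinates nonzero. *)
Definition in_torus (C : fieldType) (r : nat) (t : 'I_r -> C) : Prop :=
  forall a, t a != 0.

(* A character of T, i.e. an element of X^*(T) = Z^r, evaluated at t in T:
   chi_mu(t) = prod_a t_a^(mu_a). *)
Definition chi (C : fieldType) (r : nat) (mu : 'I_r -> int) (t : 'I_r -> C) : C :=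
  \prod_(a < r) t a ^ (mu a).

(* The linear form on t identified with chi_mu (chi_mu(exp y) = exp(dchi_mu y)). *)
Definition dchi (C : fieldType) (r : nat) (mu : 'I_r -> int) (y : 'I_r -> C) : C :=
  \sum_(a < r) (mu a)%:~R * y a.

(* Restriction to T of the representation rho on V = C^n, with weight basis
   given by the columns of the invertible matrix B, of weights mu_1..mu_n. *)
Definition rhoT (C : fieldType) (r n : nat) (B : 'M[C]_n) (mu : 'I_n -> 'I_r -> int)
  (t : 'I_r -> C) : 'M[C]_n :=
  B *m diag_mx (\row_(m < n) chi (mu m) t) *m invmx B.

Definition drhoT (C : fieldType) (r n : nat) (B : 'M[C]_n) (mu : 'I_n -> 'I_r -> int)
  (x : 'I_r -> C) : 'M[C]_n :=
  B *m diag_mx (\row_(m < n) dchi (mu m) x) *m invmx B.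

(* Main.v *)
Require Import Defs.
From HB Require Import structures.
From mathcomp Require Import all_boot all_order all_algebra.
From mathcomp Require Import complex reals.
Import Order.TTheory GRing.Theory Num.Theory.
Local Open Scope ring_scope.
Local Open Scope complex_scope.

Lemma chi_e (R : realType) (r : nat) (mu : 'I_r -> int) (a : 'I_r) :
  chi mu (fun b => if b == a then 2 else 1 : R[i]) = 2 ^ (mu a).
Proof.
rewrite /chi (bigD1 a) //= eqxx big1 ?mulr1 // => b /negPf ->.
by rewrite exp1rz.
Qed.

Theorem lemma3 (R : realType) (r n : nat) (B : 'M[R[i]]_n)
  (mu : 'I_n -> 'I_r -> int) (g x : 'I_r -> R[i]) (i j k l : 'I_n) :
  B \in unitmx ->
  in_torus g ->
  rhoT B mu g = drhoT B mu x ->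
  (forall t : 'I_r -> R[i], in_torus t ->
     chi (mu i) t * chi (mu j) t = chi (mu k) t * chi (mu l) t) ->
  ('X - (chi (mu i) g)%:P) * ('X - (chi (mu j) g)%:P)
  = ('X - (chi (mu k) g)%:P) * ('X - (chi (mu l) g)%:P) :> {poly R[i]}.
Proof.
move=> uB tg Hrho Hchi.
have Hd : forall m, chi (mu m) g = dchi (mu m) x.
  move=> m.
  have := congr1 (fun M => invmx B *m M *m B) Hrho.
  rewrite /rhoT /drhoT /= !mulmxA !mulVmx // !mul1mx !mulmxKV // => /matrixP /(_ m m).
  by rewrite !mxE eqxx !mulr1n.
have Hmu : forall a, mu i a + mu j a = mu k a + mu l a.
  move=> a.
  have ta : in_torus (fun b => if b == a then 2 else 1 : R[i]).
    move=> b /=; case: (b == a); by rewrite ?oner_neq0 ?pnatr_eq0.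
  have := Hchi _ ta; rewrite !chi_e.
  have u2 : (2 : R[i]) \is a GRing.unit by rewrite unitfE pnatr_eq0.
  rewrite -!exprzDr // => E.
  have : (2 : R[i]) ^ (mu i a + mu j a - (mu k a + mu l a)) == 1.
    by rewrite exprzDr ?E -?exprzDr ?subrr ?expr0z // unitrN.
  rewrite pexprz_eq1 ?ler0n // (_ : (2 : R[i]) == 1 = false).
    by rewrite orbF subr_eq0 => /eqP.
  apply/negbTE; rewrite -subr_eq0 (_ : (2:R[i]) - 1 = 1) ?oner_neq0 //.
  by rewrite -(natrB _ (isT : (1 <= 2)%N)).
have Hs : chi (mu i) g + chi (mu j) g = chi (mu k) g + chi (mu l) g.
  rewrite !Hd /dchi -!big_split; apply: eq_bigr => a _.
  rewrite /= -!mulrDl. by rewrite -!intrD Hmu.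
have Hp := Hchi g tg.
have E : forall a b : R[i], ('X - a%:P) * ('X - b%:P) =
   'X * 'X - (a + b)%:P * 'X + (a * b)%:P :> {poly R[i]}.
  move=> a b; rewrite polyCD polyCM mulrBl !mulrBr mulrDl opprD addrA opprK.
  by rewrite opprD addrA [b%:P * 'X]mulrC (addrAC ('X * 'X) (- ('X * b%:P))).
by rewrite !E Hs Hp.
Qed.
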